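(* Let $n$ be a positive integer and $k$ an integer with $1<k<n$ and $\gcd(k,n)=1$. If $n$ is odd, there is at most one quasigroup operation on $\{1,2,\dots,n\}$ that is idempotent and $k$-translatable with respect to the ordering $1,2,\dots,n$. If $n$ is even, there is no such quasigroup.
   Context: A groupoid on $\{1,\dots,n\}$ is $k$-translatable with respect to the ordering $1,\dots,n$ if $i\cdot j=(i-1)\cdot(j-k)$ for all $i\in\{2,\dots,n\}$, $j\in\{1,\dots,n\}$, where $j-k$ is taken modulo $n$ in $\{1,\dots,n\}$ (each Cayley-table row is the previous row with its last $k$ entries moved to the front). Idempotent means $x\cdot x=x$ for all $x$. *)

(* Defs.v *)
(* Elements 1..n of the paper are represented by 'I_n,
   element i of the paper being the ordinal with value i-1. *)
From mathcomp Require Import all_boot.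
Set Implicit Arguments. Unset Strict Implicit. Unset Printing Implicit Defensive.

Definition quasigroup (T : Type) (op : T -> T -> T) : Prop :=
  forall a b : T, (exists! x, op a x = b) /\ (exists! y, op y a = b).

Definition is_idempotent (T : Type) (op : T -> T -> T) : Prop :=
  forall x : T, op x x = x.

(* k-translatable w.r.t. the ordering 1,...,n:  i*j = (i-1)*(j-k)  for i in 2..n,
   j in 1..n, j-k taken mod n in 1..n.  In 0-based values: for i >= 1,
   op i j = op (i-1) ((j - k) mod n). *)
Definition translatable (n k : nat) (op : 'I_n -> 'I_n -> 'I_n) : Prop :=
  forall i j i' j' : 'I_n,
    0 < val i -> val i' = (val i).-1 -> val j' = (val j + n - k) %% n ->
    op i j = op i' j'.
Arguments translatable n k op : clear implicits.

(* Main.v *)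
Require Import Defs.
From mathcomp Require Import all_boot.
From mathcomp Require Import zify.
Set Implicit Arguments. Unset Strict Implicit.

Definition mk {n : nat} (Hn : 0 < n) (t : nat) : 'I_n := Ordinal (ltn_pmod t Hn).

Lemma row_red (n k : nat) (Hn : 0 < n) (Hk : k < n) op :
  translatable n k op ->
  forall m (Hm : m < n) (j : 'I_n),
    op (Ordinal Hm) j = op (Ordinal Hn) (mk Hn (j + m * (n - k))).
Proof.
move=> Ht; elim=> [|m IH] Hm j.
  have -> : Ordinal Hm = Ordinal Hn by apply: val_inj.
  congr (op _ _); apply: val_inj => /=; rewrite mul0n addn0 modn_small //.
have Hm' : m < n by apply: ltnW.
rewrite (Ht (Ordinal Hm) j (Ordinal Hm') (mk Hn (j + n - k))) //.
rewrite IH; congr (op _ _); apply: val_inj => /=.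
rewrite modnDml mulSn addnA; by rewrite -addnBA ?(ltnW Hk).
Qed.

Lemma opE (n k : nat) (Hn : 0 < n) (Hk : k < n) op :
  translatable n k op ->
  forall (i j : 'I_n), op i j = op (Ordinal Hn) (mk Hn (j + i * (n - k))).
Proof.
move=> Ht [i Hi] j; exact: (row_red Hn Hk Ht).
Qed.

Lemma g_inj (n k : nat) (Hn : 0 < n) (Hk : k < n) op :
  is_idempotent op -> translatable n k op ->
  forall i i' : 'I_n, mk Hn (i + i * (n - k)) = mk Hn (i' + i' * (n - k)) -> i = i'.
Proof.
move=> Hid Ht i i' E.
have h1 := opE Hn Hk Ht i i; have h2 := opE Hn Hk Ht i' i'.
rewrite Hid in h1; rewrite Hid in h2.
by rewrite h1 h2 E.
Qed.

Theorem theorem8p9 (n k : nat) :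
  0 < n -> 1 < k -> k < n -> coprime k n ->
  (odd n ->
     forall op1 op2 : 'I_n -> 'I_n -> 'I_n,
       quasigroup op1 -> is_idempotent op1 -> translatable n k op1 ->
       quasigroup op2 -> is_idempotent op2 -> translatable n k op2 ->
       forall x y, op1 x y = op2 x y) /\
  (~~ odd n ->
     forall op : 'I_n -> 'I_n -> 'I_n,
       ~ (quasigroup op /\ is_idempotent op /\ translatable n k op)).
Proof.
move=> Hn H1k Hk Hco; split.
  move=> _ op1 op2 _ Hid1 Ht1 _ Hid2 Ht2 x y.
  pose g := fun i : 'I_n => mk Hn (i + i * (n - k)).
  have ginj : injective g by move=> i i' E; exact: (@g_inj n k Hn Hk _ Hid1 Ht1 _ _ E).
  have [i _ Ei] : exists2 i, true & mk Hn (y + x * (n - k)) = g i.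
    have /codomP [i Ei] := injF_onto ginj (mk Hn (y + x * (n - k))).
    by exists i.
  rewrite (opE Hn Hk Ht1 x y) (opE Hn Hk Ht2 x y) Ei /g.
  have h1 := opE Hn Hk Ht1 i i; have h2 := opE Hn Hk Ht2 i i.
  rewrite Hid1 in h1; rewrite Hid2 in h2.
  by rewrite -h1 -h2.
move=> Hev op [_ [Hid Ht]].
have Hh : n./2 < n by rewrite -divn2 ltn_Pdiv.
have kodd : odd k.
  apply/negPn/negP => Hke.
  move: Hco; rewrite /coprime => /eqP Hg.
  have : 2 %| gcdn k n by rewrite dvdn_gcd !dvdn2 Hke Hev.
  by rewrite Hg.
have := @g_inj n k Hn Hk _ Hid Ht (Ordinal Hn) (Ordinal Hh).
have E : mk Hn (Ordinal Hn + Ordinal Hn * (n - k)) =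
         mk Hn (Ordinal Hh + Ordinal Hh * (n - k)).
  apply: val_inj => /=.
  rewrite mul0n add0n mod0n addnC -mulnSr.
  have Hc : (n - k).+1 = ((n - k).+1)./2.*2.
    have := odd_double_half (n - k).+1.
    by rewrite /= oddB ?(ltnW Hk) // kodd (negbTE Hev) /= add0n => ->.
  have Hd : n = n./2.*2.
    have := odd_double_half n.
    by rewrite (negbTE Hev) add0n => ->.
  by rewrite Hc -doubleMr doubleMl -Hd modnMr.
move=> /(_ E) /(congr1 val) /= Hz.
have H2 : 0 < n./2.
  rewrite -divn2 divn_gt0 //.
  move: (Hn) (Hev); case: (n) => [|[|m]] //.
by move: H2; rewrite -Hz.
Qed.
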